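(* Let $n\ge3$, $0<\epsilon<1$, define $\alpha,\beta,\gamma,\delta$, $P$, $Q$ as in the context, and let $$h''(\rho) = \frac{\rho^{n+1} - \rho^n + \rho^n P(\rho) + \alpha + \beta\rho}{(1-\rho)\rho\,Q(\rho)}.$$ If $\epsilon>0$ is sufficiently small, then near $\rho=\epsilon$ there is a Laurent expansion $$h''(\rho) = \frac{1}{\rho-\epsilon} + \hat Q_0 + \hat Q_1(\rho-\epsilon) + \cdots$$ with real coefficients $\hat Q_0,\hat Q_1,\dots$; i.e. $h''$ has a simple pole at $\rho=\epsilon$ with residue $1$.
   Context: $D(\epsilon) = -n\epsilon^{n+2} + (n+2)\epsilon^{n+1} + n - (n+2)\epsilon$, $N(\epsilon) = -n\epsilon^{n+1} + (n+1)\epsilon^n - 1$, $K(\epsilon) = -1 + \frac{n+1}{n-1}\epsilon - \epsilon^{n-1} + \frac{n-3}{n-1}\epsilon^n$, $M(\epsilon) = \frac{\epsilon^{n+1}-1}{n(n+1)} + \frac{\epsilon-\epsilon^n}{n(n-1)}$; $\delta = \Big(\epsilon^{n-2}(1-\epsilon) - \frac{(n+2)N K}{D} + \frac{n(n-3)}{n-1}\epsilon^{n-1} - (n-1)\epsilon^{n-2} + \frac{n+1}{n-1}\Big)\Big(\frac{(n+2)N}{D}M + \frac{-(n-1)\epsilon^n + n\epsilon^{n-1}-1}{n(n-1)}\Big)^{-1}$, $\gamma = n(n+1)(n+2)(M\delta + K)/D$, $\alpha = -1 - \frac{\delta}{n(n+1)} - \frac{\gamma}{(n+1)(n+2)}$,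 $\beta = \frac{n+1}{n-1} + \frac{\delta}{n(n-1)} + \frac{\gamma}{n(n+1)}$ (denominators are nonzero for small $\epsilon$); $P(\rho) = -\frac{2n+\delta}{n(n-1)} + \frac{(\delta-\gamma)\rho}{n(n+1)} + \frac{\gamma\rho^2}{(n+1)(n+2)}$, $Q(\rho) = \rho^{n-1} - \rho^n - \rho^nP(\rho) - \alpha - \beta\rho$. *)

(* Defs.v *)
From Stdlib Require Import Reals.
From Coquelicot Require Import Coquelicot.
Open Scope R_scope.

Section Defs.
Variables (n : nat) (e : R).
Let nr := INR n.

Definition Dfun : R :=
  - nr * e ^ (n + 2) + (nr + 2) * e ^ (n + 1) + nr - (nr + 2) * e.
Definition Nfun : R :=
  - nr * e ^ (n + 1) + (nr + 1) * e ^ n - 1.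
Definition Kfun : R :=
  -1 + (nr + 1) / (nr - 1) * e - e ^ (n - 1) + (nr - 3) / (nr - 1) * e ^ n.
Definition Mfun : R :=
  (e ^ (n + 1) - 1) / (nr * (nr + 1)) + (e - e ^ n) / (nr * (nr - 1)).

Definition delta : R :=
  (e ^ (n - 2) * (1 - e) - (nr + 2) * Nfun * Kfun / Dfun
     + nr * (nr - 3) / (nr - 1) * e ^ (n - 1) - (nr - 1) * e ^ (n - 2)
     + (nr + 1) / (nr - 1))
  / ((nr + 2) * Nfun / Dfun * Mfun
     + (- (nr - 1) * e ^ n + nr * e ^ (n - 1) - 1) / (nr * (nr - 1))).

Definition gamma : R :=
  nr * (nr + 1) * (nr + 2) * (Mfun * delta + Kfun) / Dfun.

Definition alpha : R :=
  -1 - delta / (nr * (nr + 1)) - gamma / ((nr + 1) * (nr + 2)).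

Definition beta : R :=
  (nr + 1) / (nr - 1) + delta / (nr * (nr - 1)) + gamma / (nr * (nr + 1)).

Definition Pfun (rho : R) : R :=
  - (2 * nr + delta) / (nr * (nr - 1)) + (delta - gamma) * rho / (nr * (nr + 1))
  + gamma * rho ^ 2 / ((nr + 1) * (nr + 2)).

Definition Qfun (rho : R) : R :=
  rho ^ (n - 1) - rho ^ n - rho ^ n * Pfun rho - alpha - beta * rho.

Definition h2 (rho : R) : R :=
  (rho ^ (n + 1) - rho ^ n + rho ^ n * Pfun rho + alpha + beta * rho)
  / ((1 - rho) * rho * Qfun rho).
End Defs.

(* Main.v *)
Require Import Defs.
From Stdlib Require Import Reals Lra Lia Field.
From Coquelicot Require Import Coquelicot.
Open Scope R_scope.

Definition Geo (a : nat -> R) := exists M L, 0 < L /\ forall k, Rabs (a k) <= M * L ^ k.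
Definition Ent (a : nat -> R) := forall L, 0 < L -> exists M, forall k, Rabs (a k) <= M * L ^ k.

Definition padd (a b : nat -> R) k := a k + b k.
Definition pscal (c : R) (a : nat -> R) k := c * a k.
Definition cst (c : R) (k : nat) : R := match k with O => c | _ => 0 end.

Lemma bound_M_nonneg a M L : (forall k, Rabs (a k) <= M * L ^ k) -> 0 <= M.
Proof. intros H. specialize (H O). simpl in H. pose proof (Rabs_pos (a O)). lra. Qed.

Lemma radius_of_bound a M r : 0 < r -> (forall k, Rabs (a k) * r ^ k <= M) ->
  Rbar_le r (CV_radius a).
Proof.
  intros Hr H. destruct (CV_radius_bounded a) as [Hub _]. apply Hub.
  exists M. intros k. rewrite Rabs_mult, <- RPow_abs, (Rabs_pos_eq r) by lra. apply H.
Qed.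

Lemma Geo_radius a : Geo a -> exists r, 0 < r /\ forall x, Rabs x < r -> Rbar_lt (Rabs x) (CV_radius a).
Proof.
  intros [M [L [HL H]]]. exists (/ L). split. apply Rinv_0_lt_compat; lra.
  intros x Hx. assert (Hle : Rbar_le (/ L) (CV_radius a)).
  { apply (radius_of_bound a M). apply Rinv_0_lt_compat; lra.
    intros k. eapply Rle_trans. apply Rmult_le_compat_r. apply pow_le.
    left; apply Rinv_0_lt_compat; lra. apply H.
    rewrite Rmult_assoc, <- Rpow_mult_distr, Rinv_r, pow1 by lra. lra. }
  destruct (CV_radius a) as [c| |]; simpl in *; auto; lra.
Qed.

Lemma Ent_radius a : Ent a -> forall x, Rbar_lt (Rabs x) (CV_radius a).
Proof.
  intros H x. assert (Hp : 0 < Rabs x + 1) by (pose proof (Rabs_pos x); lra).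
  destruct (H (/ (Rabs x + 1))) as [M HM]. apply Rinv_0_lt_compat; lra.
  assert (Hle : Rbar_le (Rabs x + 1) (CV_radius a)).
  { apply (radius_of_bound a M). lra.
    intros k. eapply Rle_trans. apply Rmult_le_compat_r. apply pow_le. lra. apply HM.
    rewrite Rmult_assoc, <- Rpow_mult_distr, Rinv_l, pow1 by lra. lra. }
  destruct (CV_radius a) as [c| |]; simpl in *; auto; lra.
Qed.

Lemma Ent_Geo a : Ent a -> Geo a.
Proof. intros H. destruct (H 1) as [M HM]. lra. exists M, 1. split; auto; lra. Qed.

Lemma bound_mono a M L L' : (forall k, Rabs (a k) <= M * L ^ k) -> 0 < L <= L' ->
  forall k, Rabs (a k) <= M * L' ^ k.
Proof.
  intros H HL k. pose proof (bound_M_nonneg _ _ _ H).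
  eapply Rle_trans. apply H. apply Rmult_le_compat_l; auto. apply pow_incr; lra.
Qed.

Lemma INR_S_le_pow2 k : INR (S k) <= 2 ^ k.
Proof.
  induction k. simpl; lra. rewrite S_INR. simpl. pose proof (pow_R1_Rle 2 k ltac:(lra)). simpl in IHk. lra.
Qed.

Lemma mult_bound a b M1 M2 L : 0 < L ->
  (forall k, Rabs (a k) <= M1 * L ^ k) -> (forall k, Rabs (b k) <= M2 * L ^ k) ->
  forall k, Rabs (PS_mult a b k) <= (M1 * M2) * (2 * L) ^ k.
Proof.
  intros HL Ha Hb k. pose proof (bound_M_nonneg _ _ _ Ha). pose proof (bound_M_nonneg _ _ _ Hb).
  unfold PS_mult. eapply Rle_trans. apply Rsum_abs.
  eapply Rle_trans. apply sum_Rle with (Bn := fun _ => M1 * M2 * L ^ k).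
  { intros j Hj. rewrite Rabs_mult.
    replace (M1 * M2 * L ^ k) with ((M1 * L ^ j) * (M2 * L ^ (k - j))).
    apply Rmult_le_compat; auto using Rabs_pos.
    assert (E : L ^ k = L ^ j * L ^ (k - j)) by (rewrite <- pow_add; f_equal; lia). rewrite E; ring. }
  rewrite sum_cte, Rpow_mult_distr.
  pose proof (INR_S_le_pow2 k). pose proof (pow_le L k ltac:(lra)).
  assert (0 <= M1 * M2) by (apply Rmult_le_pos; auto).
  replace (M1 * M2 * (2 ^ k * L ^ k)) with ((M1 * M2 * L ^ k) * 2 ^ k) by ring.
  apply Rmult_le_compat_l; auto. apply Rmult_le_pos; auto.
Qed.

Lemma Geo_mult a b : Geo a -> Geo b -> Geo (PS_mult a b).
Proof.
  intros [M1 [L1 [H1 Ha]]] [M2 [L2 [H2 Hb]]].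
  exists (M1 * M2), (2 * Rmax L1 L2). split. pose proof (Rmax_l L1 L2); lra.
  apply mult_bound. pose proof (Rmax_l L1 L2); lra.
  apply (bound_mono _ _ L1); auto. split; auto. apply Rmax_l.
  apply (bound_mono _ _ L2); auto. split; auto. apply Rmax_r.
Qed.

Lemma Ent_mult a b : Ent a -> Ent b -> Ent (PS_mult a b).
Proof.
  intros Ha Hb L HL. destruct (Ha (L/2)) as [M1 H1]. lra. destruct (Hb (L/2)) as [M2 H2]. lra.
  exists (M1 * M2). intros k.
  pose proof (mult_bound a b M1 M2 (L/2) ltac:(lra) H1 H2 k) as Hm.
  replace (2*(L/2)) with L in Hm by field. exact Hm.
Qed.

Lemma plus_bound a b M1 M2 L : 0 < L ->
  (forall k, Rabs (a k) <= M1 * L ^ k) -> (forall k, Rabs (b k) <= M2 * L ^ k) ->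
  forall k, Rabs (padd a b k) <= (M1 + M2) * L ^ k.
Proof.
  intros HL Ha Hb k. unfold padd. eapply Rle_trans. apply Rabs_triang.
  specialize (Ha k); specialize (Hb k). lra.
Qed.

Lemma Geo_plus a b : Geo a -> Geo b -> Geo (padd a b).
Proof.
  intros [M1 [L1 [H1 Ha]]] [M2 [L2 [H2 Hb]]].
  exists (M1 + M2), (Rmax L1 L2). split. pose proof (Rmax_l L1 L2); lra.
  apply plus_bound. pose proof (Rmax_l L1 L2); lra.
  apply (bound_mono _ _ L1); auto. split; auto. apply Rmax_l.
  apply (bound_mono _ _ L2); auto. split; auto. apply Rmax_r.
Qed.

Lemma Ent_plus a b : Ent a -> Ent b -> Ent (padd a b).
Proof.
  intros Ha Hb L HL. destruct (Ha L HL) as [M1 H1]. destruct (Hb L HL) as [M2 H2].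
  exists (M1 + M2). apply plus_bound; auto.
Qed.

Lemma scal_bound c a M L : (forall k, Rabs (a k) <= M * L ^ k) ->
  forall k, Rabs (pscal c a k) <= (Rabs c * M) * L ^ k.
Proof.
  intros H k. unfold pscal. rewrite Rabs_mult, Rmult_assoc.
  apply Rmult_le_compat_l. apply Rabs_pos. apply H.
Qed.

Lemma Geo_scal c a : Geo a -> Geo (pscal c a).
Proof. intros [M [L [H1 Ha]]]. exists (Rabs c * M), L. split; auto. apply scal_bound; auto. Qed.

Lemma Ent_scal c a : Ent a -> Ent (pscal c a).
Proof. intros Ha L HL. destruct (Ha L HL) as [M H]. exists (Rabs c * M). apply scal_bound; auto. Qed.

Lemma decr_bound a M L : (forall k, Rabs (a k) <= M * L ^ k) ->
  forall k, Rabs (PS_decr_1 a k) <= (M * L) * L ^ k.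
Proof. intros H k. unfold PS_decr_1. rewrite Rmult_assoc, tech_pow_Rmult. apply H. Qed.

Lemma Geo_decr a : Geo a -> Geo (PS_decr_1 a).
Proof. intros [M [L [H1 Ha]]]. exists (M * L), L. split; auto. apply decr_bound; auto. Qed.

Lemma Ent_decr a : Ent a -> Ent (PS_decr_1 a).
Proof. intros Ha L HL. destruct (Ha L HL) as [M H]. exists (M * L). apply decr_bound; auto. Qed.

Lemma Ent_cst c : Ent (cst c).
Proof.
  intros L HL. exists (Rabs c). intros [|k]; simpl. lra.
  rewrite Rabs_R0. apply Rmult_le_pos. apply Rabs_pos. apply (pow_le L (S k)); lra.
Qed.
Fixpoint binv (a : nat -> R) (k : nat) : nat -> R :=
  match k with
  | O => fun _ => / a O
  | S k' => fun i => if Nat.leb i k' then binv a k' i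
            else - / a O * sum_f_R0 (fun j => a (S j) * binv a k' (k' - j)%nat) k'
  end.
Definition PS_inv a k := binv a k k.

Lemma binv_S a k i : binv a (S k) i = if Nat.leb i k then binv a k i
            else - / a O * sum_f_R0 (fun j => a (S j) * binv a k (k - j)%nat) k.
Proof. reflexivity. Qed.

Lemma binv_eq a k i : (i <= k)%nat -> binv a k i = PS_inv a i.
Proof.
  revert i; induction k; intros i Hi.
  - assert (i = O) by lia; subst; reflexivity.
  - rewrite binv_S. destruct (Nat.leb i k) eqn:E.
    + apply Nat.leb_le in E. auto.
    + apply Nat.leb_gt in E. assert (i = S k) by lia. subst. unfold PS_inv. rewrite binv_S.
      rewrite (proj2 (Nat.leb_gt (S k) k)) by lia. reflexivity.
Qed.

Lemma PS_inv_S a k : PS_inv a (S k) = - / a O * sum_f_R0 (fun j => a (S j) * PS_inv a (k - j)%nat) k.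
Proof.
  unfold PS_inv at 1. rewrite binv_S. rewrite (proj2 (Nat.leb_gt (S k) k)) by lia. f_equal.
  apply sum_eq. intros j Hj. rewrite binv_eq by lia. reflexivity.
Qed.

Lemma PS_inv_0 a : PS_inv a O = / a O.
Proof. reflexivity. Qed.

Lemma PS_mult_inv a : a O <> 0 -> forall k, PS_mult a (PS_inv a) k = cst 1 k.
Proof.
  intros H0 [|k].
  - unfold PS_mult. simpl. rewrite PS_inv_0. field. auto.
  - unfold PS_mult. rewrite decomp_sum by lia. simpl pred.
    replace (S k - 0)%nat with (S k) by lia. rewrite PS_inv_S. simpl cst.
    match goal with |- _ + ?Sm = _ => replace Sm with (sum_f_R0 (fun j => a (S j) * PS_inv a (k - j)%nat) k) end.
    field. auto. apply sum_eq. intros j Hj. reflexivity.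
Qed.

Lemma geo_sum_le q k : 0 <= q < 1 -> sum_f_R0 (fun j => q ^ j) k <= / (1 - q).
Proof.
  intros Hq. rewrite tech3 by lra. unfold Rdiv. rewrite <- (Rmult_1_l (/ (1 - q))) at 2. apply Rmult_le_compat_r.
  left; apply Rinv_0_lt_compat; lra. pose proof (pow_le q (S k) ltac:(lra)). lra.
Qed.

Lemma Geo_inv a : a O <> 0 -> Geo a -> Geo (PS_inv a).
Proof.
  intros H0 [M [L [HL Ha]]].
  set (c0 := Rabs (a O)). assert (Hc0 : 0 < c0) by (apply Rabs_pos_lt; auto).
  assert (HM : c0 <= M) by (specialize (Ha O); simpl in Ha; unfold c0; lra).
  set (B := / c0). set (K := L + L * M / c0).
  assert (HK : L < K). { unfold K. assert (0 < L * M / c0). apply Rdiv_lt_0_compat; auto.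
    apply Rmult_lt_0_compat; lra. lra. }
  exists B, K. split. lra.
  assert (Hall : forall k i, (i <= k)%nat -> Rabs (PS_inv a i) <= B * K ^ i).
  { induction k; intros i Hi.
    - assert (i = O) by lia; subst. rewrite PS_inv_0, Rabs_inv. simpl. unfold B, c0; lra.
    - destruct (Nat.le_gt_cases i k) as [Hik|Hik]. auto.
      assert (i = S k) by lia; subst i. rewrite PS_inv_S, Rabs_mult, Rabs_Ropp, Rabs_inv.
      fold c0. fold B.
      set (q := L / K). assert (Hq : 0 <= q < 1).
      { unfold q; split. apply Rlt_le, Rdiv_lt_0_compat; lra.
        apply Rmult_lt_reg_r with K. lra. unfold Rdiv; rewrite Rmult_assoc, Rinv_l; lra. }
      assert (Hs : sum_f_R0 (fun l => Rabs (a (S l) * PS_inv a (k - l)%nat)) k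
                <= sum_f_R0 (fun j => (M * B * L * K ^ k) * q ^ j) k).
      { apply sum_Rle. intros j Hj. rewrite Rabs_mult.
        replace (M * B * L * K ^ k * q ^ j) with ((M * L ^ S j) * (B * K ^ (k - j))).
        apply Rmult_le_compat; auto using Rabs_pos. apply IHk; lia.
        assert (E1 : K ^ k = K ^ j * K ^ (k - j)) by (rewrite <- pow_add; f_equal; lia).
        assert (E2 : L ^ j = q ^ j * K ^ j).
        { rewrite <- Rpow_mult_distr. f_equal. unfold q. field. lra. }
        rewrite E1. simpl. rewrite E2. ring. }
      replace (sum_f_R0 (fun j => (M * B * L * K ^ k) * q ^ j) k) with
        ((M * B * L * K ^ k) * sum_f_R0 (fun j => q ^ j) k) in Hs
        by (rewrite scal_sum; apply sum_eq; intros; ring).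
      pose proof (geo_sum_le q k Hq) as Hg.
      assert (HB : 0 < B) by (apply Rinv_0_lt_compat; auto).
      assert (Hc : 0 <= M * B * L * K ^ k).
      { repeat apply Rmult_le_pos; try lra. apply pow_le; lra. }
      apply Rle_trans with (B * ((M * B * L * K ^ k) * / (1 - q))).
      { apply Rmult_le_compat_l. lra. eapply Rle_trans. apply Rsum_abs.
        eapply Rle_trans. apply Hs. apply Rmult_le_compat_l; auto. }
      right. unfold q, B, K. simpl. field.
      assert (0 < L * c0) by (apply Rmult_lt_0_compat; lra).
      assert (0 < L * M) by (apply Rmult_lt_0_compat; lra).
      split; lra. }
  intros k. apply (Hall k k). lia.
Qed.

Lemma PSeries_cst c x : PSeries (cst c) x = c.
Proof.
  rewrite PSeries_decr_1. 2:{ apply CV_radius_inside, Ent_radius, Ent_cst. }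
  rewrite (PSeries_ext _ (fun _ => 0)). rewrite PSeries_const_0. simpl; ring.
  intros k; reflexivity.
Qed.

Lemma PSeries_padd a b x : Rbar_lt (Rabs x) (CV_radius a) -> Rbar_lt (Rabs x) (CV_radius b) ->
  PSeries (padd a b) x = PSeries a x + PSeries b x.
Proof.
  intros Ha Hb. rewrite <- PSeries_plus by (apply CV_radius_inside; auto).
  apply PSeries_ext. intros; reflexivity.
Qed.

Lemma PSeries_pscal c a x : PSeries (pscal c a) x = c * PSeries a x.
Proof. rewrite <- PSeries_scal. apply PSeries_ext. intros; reflexivity. Qed.

Lemma PSeries_inv a x : a O <> 0 -> Rbar_lt (Rabs x) (CV_radius a) ->
  Rbar_lt (Rabs x) (CV_radius (PS_inv a)) -> PSeries a x * PSeries (PS_inv a) x = 1.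
Proof.
  intros H0 Ha Hb. rewrite <- PSeries_mult by auto.
  rewrite (PSeries_ext _ (cst 1)). apply PSeries_cst. apply PS_mult_inv; auto.
Qed.

Lemma PS_mult_0 a b : PS_mult a b O = a O * b O.
Proof. unfold PS_mult. simpl. ring. Qed.
Lemma PS_mult_1 a b : PS_mult a b 1 = a O * b 1%nat + a 1%nat * b O.
Proof. unfold PS_mult. simpl. ring. Qed.

Definition Xe (e : R) (k : nat) : R := match k with O => e | 1 => 1 | _ => 0 end.

Lemma Ent_Xe e : Ent (Xe e).
Proof.
  intros L HL. exists (Rabs e + / L). intros [|[|k]]; simpl.
  - pose proof (Rinv_0_lt_compat L HL). lra.
  - rewrite Rabs_R1. pose proof (Rabs_pos e). field_simplify. 2: lra.
    assert (Rabs e * L >= 0) by (apply Rle_ge, Rmult_le_pos; lra). lra.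
  - rewrite Rabs_R0. apply Rmult_le_pos. pose proof (Rabs_pos e). pose proof (Rinv_0_lt_compat L HL). lra.
    apply (pow_le L (S (S k))); lra.
Qed.

Lemma PSeries_Xe e x : PSeries (Xe e) x = e + x.
Proof.
  rewrite PSeries_decr_1. 2:{ apply CV_radius_inside, Ent_radius, Ent_Xe. }
  rewrite (PSeries_ext _ (cst 1)). rewrite PSeries_cst. simpl; ring.
  intros [|k]; reflexivity.
Qed.

Fixpoint pw (e : R) (k : nat) : nat -> R :=
  match k with O => cst 1 | S k => PS_mult (Xe e) (pw e k) end.

Lemma Ent_pw e k : Ent (pw e k).
Proof. induction k; simpl. apply Ent_cst. apply Ent_mult; auto. apply Ent_Xe. Qed.

Lemma PSeries_pw e k x : PSeries (pw e k) x = (e + x) ^ k.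
Proof.
  induction k; simpl. apply PSeries_cst.
  rewrite PSeries_mult by (apply Ent_radius; auto using Ent_Xe, Ent_pw).
  rewrite PSeries_Xe, IHk. reflexivity.
Qed.

Lemma pw_0 e k : pw e k O = e ^ k.
Proof. induction k; simpl. reflexivity. rewrite PS_mult_0, IHk. reflexivity. Qed.

Lemma pw_1 e k : pw e k 1%nat = INR k * e ^ (k - 1).
Proof.
  induction k. simpl. ring.
  simpl pw. rewrite PS_mult_1, IHk, pw_0. simpl Xe.
  destruct k. simpl. ring. replace (S (S k) - 1)%nat with (S k) by lia.
  replace (S k - 1)%nat with k by lia. rewrite (S_INR (S k)). simpl. ring.
Qed.
Lemma algQ (nr e t : R) : nr <> 0 -> nr - 1 <> 0 -> nr + 1 <> 0 -> nr + 2 <> 0 ->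
  let p := fun k : nat => t * e ^ k in
  let D := - nr * p 5%nat + (nr + 2) * p 4%nat + nr - (nr + 2) * e in
  let N := - nr * p 4%nat + (nr + 1) * p 3%nat - 1 in
  let K := -1 + (nr + 1) / (nr - 1) * e - p 2%nat + (nr - 3) / (nr - 1) * p 3%nat in
  let M := (p 4%nat - 1) / (nr * (nr + 1)) + (e - p 3%nat) / (nr * (nr - 1)) in
  let W := (nr + 2) * N / D * M + (- (nr - 1) * p 3%nat + nr * p 2%nat - 1) / (nr * (nr - 1)) in
  D <> 0 -> (nr + 2) * N * ((p 4%nat - 1) * (nr - 1) + (e - p 3%nat) * (nr + 1)) +
   (- (nr - 1) * p 3%nat + nr * p 2%nat - 1) * (D * (nr + 1)) <> 0 ->
  let de := (p 1%nat * (1 - e) - (nr + 2) * N * K / D + nr * (nr - 3) / (nr - 1) * p 2%nat - (nr - 1) * p 1%nat + (nr + 1) / (nr - 1)) / W in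
  let g := nr * (nr + 1) * (nr + 2) * (M * de + K) / D in
  let al := -1 - de / (nr * (nr + 1)) - g / ((nr + 1) * (nr + 2)) in
  let be := (nr + 1) / (nr - 1) + de / (nr * (nr - 1)) + g / (nr * (nr + 1)) in
  let p0 := - (2 * nr + de) / (nr * (nr - 1)) in
  let p1 := (de - g) / (nr * (nr + 1)) in
  let p2 := g / ((nr + 1) * (nr + 2)) in
  p 2%nat - p 3%nat - p 3%nat * (p0 + p1 * e + p2 * e ^ 2) - al - be * e = 0 /\
  (nr - 1) * p 1%nat - nr * p 2%nat - (p 3%nat * (p1 + p2 * (2 * e)) + nr * p 2%nat * (p0 + p1 * e + p2 * e ^ 2)) - be
   = p 1%nat * (1 - e).
Proof.
  intros H1 H2 H3 H4 p D N K M W HD HW de g al be p0 p1 p2.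
  unfold p0, p1, p2, al, be, g, de. unfold W in *. unfold M, K, N, D in *. unfold p in *.
  split; field; repeat split; auto.
Qed.
Definition Wpf (n : nat) (e : R) : R :=
  let nr := INR n in let t := e ^ (n - 3) in
  (nr + 2) * (- nr * (t * e ^ 4) + (nr + 1) * (t * e ^ 3) - 1) *
  ((t * e ^ 4 - 1) * (nr - 1) + (e - t * e ^ 3) * (nr + 1)) +
  (- (nr - 1) * (t * e ^ 3) + nr * (t * e ^ 2) - 1) *
  ((- nr * (t * e ^ 5) + (nr + 2) * (t * e ^ 4) + nr - (nr + 2) * e) * (nr + 1)).

Lemma Wpf_0 n : Wpf n 0 = -2.
Proof. unfold Wpf. simpl. ring. Qed.

Lemma Wpf_small n : exists d, 0 < d /\ forall e, 0 < e < d -> Wpf n e < -1.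
Proof.
  assert (Hc : continuity_pt (Wpf n) 0).
  { apply continuity_pt_filterlim. apply (ex_derive_continuous (K:=R_AbsRing) (V:=R_NormedModule)). unfold Wpf. auto_derive. trivial. }
  destruct (Hc 1 Rlt_0_1) as [alp [Ha H]].
  exists alp. split; auto. intros e He. specialize (H e). rewrite Wpf_0 in H.
  assert (Hd : R_dist (Wpf n e) (-2) < 1).
  { apply H. split. split. exact I. lra. simpl. unfold R_dist. rewrite Rabs_pos_eq; lra. }
  simpl in Hd. unfold R_dist in Hd. apply Rabs_def2 in Hd. lra.
Qed.
Lemma pow_sub3 (x : R) n k j : (3 <= n)%nat -> j = (n - 3 + k)%nat -> x ^ j = x ^ (n - 3) * x ^ k.
Proof. intros _ ->. apply pow_add. Qed.

Definition p0f n e := - (2 * INR n + delta n e) / (INR n * (INR n - 1)).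
Definition p1f n e := (delta n e - gamma n e) / (INR n * (INR n + 1)).
Definition p2f n e := gamma n e / ((INR n + 1) * (INR n + 2)).
Definition Pseq n e := padd (cst (p0f n e)) (padd (pscal (p1f n e) (Xe e)) (pscal (p2f n e) (PS_mult (Xe e) (Xe e)))).
Definition qa n e := padd (pw e (n-1)) (padd (pscal (-1) (pw e n))
   (padd (pscal (-1) (PS_mult (pw e n) (Pseq n e))) (padd (cst (- alpha n e)) (pscal (- beta n e) (Xe e))))).

Ltac ent := repeat first [apply Ent_plus | apply Ent_mult | apply Ent_scal | apply Ent_cst
  | apply Ent_Xe | apply Ent_pw | apply Ent_decr].

Lemma Ent_qa n e : Ent (qa n e).
Proof. unfold qa, Pseq. ent. Qed.

Ltac ps_simp := repeat first [
    rewrite PSeries_padd by (apply Ent_radius; ent)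
  | rewrite PSeries_pscal
  | rewrite PSeries_mult by (apply Ent_radius; ent)
  | rewrite PSeries_pw | rewrite PSeries_Xe | rewrite PSeries_cst ].

Lemma PSeries_qa n e x : PSeries (qa n e) x = Qfun n e (e + x).
Proof.
  unfold qa, Pseq. ps_simp. unfold Qfun, Pfun, p0f, p1f, p2f.
  set (u := (e + x) ^ (n - 1)). set (v := (e + x) ^ n). unfold Rdiv; ring.
Qed.

Lemma qa_0 n e : qa n e O = e ^ (n - 1) - e ^ n - e ^ n * (p0f n e + p1f n e * e + p2f n e * e ^ 2)
  - alpha n e - beta n e * e.
Proof.
  unfold qa, Pseq, padd, pscal. rewrite !PS_mult_0, !pw_0. cbn [cst Xe].
  set (u := e ^ (n - 1)). set (v := e ^ n). unfold Rdiv; ring.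
Qed.

Lemma qa_1 n e : qa n e 1%nat = INR (n - 1) * e ^ (n - 1 - 1) - INR n * e ^ (n - 1)
  - (e ^ n * (p1f n e + p2f n e * (2 * e)) + INR n * e ^ (n - 1) * (p0f n e + p1f n e * e + p2f n e * e ^ 2))
  - beta n e.
Proof.
  unfold qa, Pseq, padd, pscal. rewrite !PS_mult_1, !PS_mult_0, !pw_1, !pw_0. cbn [cst Xe].
  set (u := e ^ (n - 1)). set (v := e ^ n). set (w := e ^ (n - 1 - 1)). unfold Rdiv; ring.
Qed.

Lemma coef_ok n e : (3 <= n)%nat -> 0 < e < 1/2 -> Wpf n e <> 0 ->
  qa n e O = 0 /\ qa n e 1%nat = e ^ (n - 2) * (1 - e).
Proof.
  intros Hn He HW.
  assert (Hnr : 3 <= INR n) by (replace 3 with (INR 3) by (simpl; ring); apply le_INR; auto).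
  set (t := e ^ (n - 3)).
  assert (Ht : 0 < t <= 1).
  { split. apply pow_lt; lra. unfold t. rewrite <- (pow1 (n - 3)). apply pow_incr. lra. }
  assert (HD : - INR n * (t * e ^ 5) + (INR n + 2) * (t * e ^ 4) + INR n - (INR n + 2) * e <> 0).
  { assert (0 <= t * e ^ 4 * ((INR n + 2) - INR n * e)).
    { apply Rmult_le_pos. apply Rmult_le_pos. lra. apply pow_le; lra. nra. }
    replace (- INR n * (t * e ^ 5) + (INR n + 2) * (t * e ^ 4) + INR n - (INR n + 2) * e)
      with (t * e ^ 4 * ((INR n + 2) - INR n * e) + (INR n - (INR n + 2) * e)) by (simpl; ring).
    nra. }
  pose proof (algQ (INR n) e t ltac:(lra) ltac:(lra) ltac:(lra) ltac:(lra) HD HW) as HA.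
  cbv zeta in HA.
  rewrite qa_0, qa_1, minus_INR by lia. replace (n - 1 - 1)%nat with (n - 2)%nat by lia.
  unfold p0f, p1f, p2f, alpha, beta, gamma, delta, Mfun, Kfun, Nfun, Dfun.
  rewrite (pow_sub3 e n 5 (n + 2)) by lia.
  rewrite (pow_sub3 e n 4 (n + 1)) by lia.
  rewrite (pow_sub3 e n 3 n) by lia.
  rewrite (pow_sub3 e n 2 (n - 1)) by lia.
  rewrite (pow_sub3 e n 1 (n - 2)) by lia.
  fold t. exact HA.
Qed.
Lemma h2_id n e rho : (3 <= n)%nat -> rho <> 0 -> 1 - rho <> 0 -> Qfun n e rho <> 0 ->
  h2 n e rho = rho ^ (n - 2) * (1 - rho) / Qfun n e rho - / ((1 - rho) * rho).
Proof.
  intros Hn H0 H1 HQ. unfold h2.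
  assert (Hnum : rho ^ (n + 1) - rho ^ n + rho ^ n * Pfun n e rho + alpha n e + beta n e * rho
     = rho ^ (n - 2) * rho * (1 - rho) ^ 2 - Qfun n e rho).
  { unfold Qfun. rewrite (pow_sub3 rho n 4 (n + 1)), (pow_sub3 rho n 3 n),
      (pow_sub3 rho n 2 (n - 1)), (pow_sub3 rho n 1 (n - 2)) by lia.
    set (t := rho ^ (n - 3)). set (P := Pfun n e rho). unfold Rdiv; ring. }
  rewrite Hnum. set (q := Qfun n e rho). set (u := rho ^ (n - 2)). field. auto.
Qed.

Definition Gs n e := PS_mult (pw e (n - 2)) (padd (cst 1) (pscal (-1) (Xe e))).
Definition Ss n e := PS_decr_1 (qa n e).
Definition Ts n e := PS_inv (Ss n e).
Definition Us n e := padd (PS_mult (Gs n e) (Ts n e)) (cst (-1)).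
Definition Vs n e := PS_decr_1 (Us n e).
Definition ws e := PS_mult (padd (cst 1) (pscal (-1) (Xe e))) (Xe e).
Definition Wis e := PS_inv (ws e).
Definition cs n e := padd (Vs n e) (pscal (-1) (Wis e)).

Lemma main_e n e : (3 <= n)%nat -> 0 < e < 1/2 -> Wpf n e <> 0 ->
  exists r : R, 0 < r /\ exists c : nat -> R,
    forall rho : R, 0 < Rabs (rho - e) < r ->
      is_pseries c (rho - e) (h2 n e rho - / (rho - e)).
Proof.
  intros Hn He HW. destruct (coef_ok n e Hn He HW) as [Hq0 Hq1].
  assert (HS0 : Ss n e O <> 0).
  { unfold Ss, PS_decr_1. rewrite Hq1. apply Rmult_integral_contrapositive. split.
    apply pow_nonzero; lra. lra. }
  assert (Hw0 : ws e O <> 0).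
  { unfold ws. rewrite PS_mult_0. unfold padd, pscal. cbn [cst Xe].
    apply Rmult_integral_contrapositive. split; lra. }
  assert (EntS : Ent (Ss n e)) by (unfold Ss; apply Ent_decr, Ent_qa).
  assert (EntG : Ent (Gs n e)) by (unfold Gs; ent).
  assert (Entw : Ent (ws e)) by (unfold ws; ent).
  assert (GeoT : Geo (Ts n e)) by (apply Geo_inv; auto; apply Ent_Geo; auto).
  assert (GeoGT : Geo (PS_mult (Gs n e) (Ts n e))) by (apply Geo_mult; auto; apply Ent_Geo; auto).
  assert (GeoU : Geo (Us n e)) by (apply Geo_plus; auto; apply Ent_Geo, Ent_cst).
  assert (GeoWi : Geo (Wis e)) by (apply Geo_inv; auto; apply Ent_Geo; auto).
  assert (Geoc : Geo (cs n e)) by (apply Geo_plus; [apply Geo_decr; auto | apply Geo_scal; auto]).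
  destruct (Geo_radius _ GeoT) as [r1 [Hr1 R1]].
  destruct (Geo_radius _ GeoGT) as [r2 [Hr2 R2]].
  destruct (Geo_radius _ GeoU) as [r3 [Hr3 R3]].
  destruct (Geo_radius _ GeoWi) as [r4 [Hr4 R4]].
  destruct (Geo_radius _ Geoc) as [r5 [Hr5 R5]].
  set (r := Rmin (Rmin (Rmin r1 r2) (Rmin r3 r4)) (Rmin r5 (Rmin e (1 - e)))).
  assert (Hr : 0 < r).
  { unfold r. repeat apply Rmin_glb_lt; lra. }
  exists r. split; auto. exists (cs n e). intros rho Hrho.
  set (x := rho - e). fold x in Hrho. replace rho with (e + x) by (unfold x; ring).
  assert (Hx : Rabs x < r) by lra.
  assert (Hx1 : Rabs x < r1). { eapply Rlt_le_trans. apply Hx. unfold r.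
    eapply Rle_trans. apply Rmin_l. eapply Rle_trans. apply Rmin_l. apply Rmin_l. }
  assert (Hx2 : Rabs x < r2). { eapply Rlt_le_trans. apply Hx. unfold r.
    eapply Rle_trans. apply Rmin_l. eapply Rle_trans. apply Rmin_l. apply Rmin_r. }
  assert (Hx3 : Rabs x < r3). { eapply Rlt_le_trans. apply Hx. unfold r.
    eapply Rle_trans. apply Rmin_l. eapply Rle_trans. apply Rmin_r. apply Rmin_l. }
  assert (Hx4 : Rabs x < r4). { eapply Rlt_le_trans. apply Hx. unfold r.
    eapply Rle_trans. apply Rmin_l. eapply Rle_trans. apply Rmin_r. apply Rmin_r. }
  assert (Hx5 : Rabs x < r5). { eapply Rlt_le_trans. apply Hx. unfold r.
    eapply Rle_trans. apply Rmin_r. apply Rmin_l. }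
  assert (Hx6 : Rabs x < Rmin e (1 - e)). { eapply Rlt_le_trans. apply Hx. unfold r.
    eapply Rle_trans. apply Rmin_r. apply Rmin_r. }
  assert (Hxe : Rabs x < e /\ Rabs x < 1 - e).
  { split; eapply Rlt_le_trans; try apply Hx6. apply Rmin_l. apply Rmin_r. }
  assert (Hx0 : x <> 0). { intro Hz. rewrite Hz, Rabs_R0 in Hrho. lra. }
  pose proof (Rabs_def2 x e (proj1 Hxe)) as [Hxa Hxb].
  pose proof (Rabs_def2 x (1 - e) (proj2 Hxe)) as [Hxc Hxd].
  set (s := PSeries (Ss n e) x). set (t := PSeries (Ts n e) x).
  set (v := PSeries (Vs n e) x). set (wi := PSeries (Wis e) x).
  assert (FQ : Qfun n e (e + x) = x * s).
  { rewrite <- PSeries_qa. rewrite PSeries_decr_1.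
    rewrite Hq0. unfold s, Ss. ring. apply CV_radius_inside, Ent_radius, Ent_qa. }
  assert (Fst : s * t = 1).
  { unfold s, t, Ts. apply PSeries_inv; auto. apply Ent_radius; auto. }
  assert (FU : PSeries (Us n e) x = (e + x) ^ (n - 2) * (1 - (e + x)) * t - 1).
  { unfold Us. rewrite PSeries_padd by (auto; apply Ent_radius, Ent_cst).
    rewrite PSeries_mult by (auto; apply Ent_radius; auto). rewrite PSeries_cst.
    unfold Gs. ps_simp. fold t. ring. }
  assert (HU0 : Us n e O = 0).
  { unfold Us, padd, Ts, Gs. rewrite !PS_mult_0, PS_inv_0, pw_0. unfold padd, pscal.
    cbn [cst Xe]. unfold Ss, PS_decr_1. rewrite Hq1.
    field. repeat split; try apply pow_nonzero; lra. }
  assert (FV : PSeries (Us n e) x = x * v).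
  { rewrite PSeries_decr_1. rewrite HU0. unfold v, Vs. ring. apply CV_radius_inside; auto. }
  assert (FW : (1 - (e + x)) * (e + x) * wi = 1).
  { assert (Hws : PSeries (ws e) x = (1 - (e + x)) * (e + x)) by (unfold ws; ps_simp; ring).
    rewrite <- Hws. unfold wi, Wis. apply PSeries_inv; auto. apply Ent_radius; auto. }
  assert (Fc : PSeries (cs n e) x = v - wi).
  { unfold cs. rewrite PSeries_padd. rewrite PSeries_pscal. unfold v, wi. ring.
    unfold Vs. rewrite CV_radius_decr_1. auto.
    rewrite (CV_radius_ext _ (PS_scal (-1) (Wis e))). rewrite CV_radius_scal. auto. lra.
    intros k; reflexivity. }
  assert (Hs0 : s <> 0). { intro Hz. rewrite Hz in Fst. lra. }
  assert (HQ : Qfun n e (e + x) <> 0). { rewrite FQ. apply Rmult_integral_contrapositive; auto. }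
  replace (h2 n e (e + x) - / x) with (PSeries (cs n e) x).
  apply PSeries_correct, CV_radius_inside; auto.
  rewrite h2_id by (auto; lra). rewrite FQ, Fc.
  assert (Ht : t = / s).
  { apply (Rmult_eq_reg_l s); auto. rewrite Fst, Rinv_r; auto. }
  assert (Hwd : (1 - (e + x)) * (e + x) <> 0) by (apply Rmult_integral_contrapositive; split; lra).
  assert (Hwi : wi = / ((1 - (e + x)) * (e + x))).
  { apply (Rmult_eq_reg_l ((1 - (e + x)) * (e + x))); auto. rewrite FW, Rinv_r; auto. }
  assert (Hv : v = ((e + x) ^ (n - 2) * (1 - (e + x)) * t - 1) / x).
  { rewrite <- FU, FV. field. auto. }
  rewrite Hv, Hwi, Ht. set (u := (e + x) ^ (n - 2)). field. repeat split; auto; lra.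
Qed.

Theorem lemma4p6 (n : nat) (Hn : (3 <= n)%nat) :
  exists e0 : R, 0 < e0 /\
    forall e : R, 0 < e < e0 -> e < 1 ->
      exists r : R, 0 < r /\
      exists c : nat -> R,
        forall rho : R, 0 < Rabs (rho - e) < r ->
          is_pseries c (rho - e) (h2 n e rho - / (rho - e)).
Proof.
  destruct (Wpf_small n) as [d [Hd Hw]].
  exists (Rmin (1/2) d). split. apply Rmin_glb_lt; lra.
  intros e He He1.
  assert (e < 1/2) by (eapply Rlt_le_trans; [apply He | apply Rmin_l]).
  assert (e < d) by (eapply Rlt_le_trans; [apply He | apply Rmin_r]).
  apply main_e; auto. lra. specialize (Hw e ltac:(lra)). lra.
Qed.
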